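(* Let $\mu_0,\mu_1,\mu_2>0$, $k\ge4$ and $\boldsymbol{s}\in\mathbb{R}^n$. The canonical spline EMD cost function $\boldsymbol{c}_1[\boldsymbol{s}](\boldsymbol{a},\boldsymbol{\phi})=\big\|\mathbb{B}_k(\boldsymbol{s})-\mathbb{B}_k(\boldsymbol{a})\cdot\cos(\mathbb{B}_k(\boldsymbol{\phi}))\big\|_2^2$, defined on $\boldsymbol{\mathcal{S}}_{\mu_0,\mu_1,\mu_2}$, is not a convex function of $(\boldsymbol{a},\boldsymbol{\phi})$.
   Context: Spline setting: $k,\ell\in\mathbb{N}$, $k\le\ell-1$, knots $\tau_0<\dots<\tau_{\ell-1}$, $n=k+\ell-2$, extended knot vector $\delta_i=\tau_0$ ($0\le i\le k-1$), $\delta_i=\tau_{i-k+1}$ ($k\le i\le n-1$), $\delta_i=\tau_{\ell-1}$ ($n\le i\le n+k-1$); $B_{i,k}$ ($0\le i\le n-1$) are the B-splines of order $k$ on this extended knot vector (de Boor–Cox recursion, vanishing-denominator terms set to $0$), and $\mathbb{B}_k(\boldsymbol{x})=\sum_{i=0}^{n-1}x_iB_{i,k}$ for $\boldsymbol{x}\in\mathbb{R}^n$. $\|f\|_2^2=\int_{\tau_0}^{\tau_{\ell-1}}f(t)^2\,dt$. For $f,g$ on $[\tau_0,\tau_{\ell-1}]$, $f\preceq g$ means pointwise $\le$; $|f|$ is the pointwise absolute value. For $\mu_0,\mu_1,\mu_2>0$ and $k\ge4$, $\boldsymbol{\mathcal{S}}_{\mu_0,\mu_1,\mu_2}$ (intrinsic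 mode spline function souls) is the set of $(\boldsymbol{a},\boldsymbol{\phi})\in\mathbb{R}^n\times\mathbb{R}^n$ with $0\preceq\mathbb{B}_k(\boldsymbol{a})$, $\mu_0\preceq\mathbb{B}_k(\boldsymbol{\phi})'$, $|\mathbb{B}_k(\boldsymbol{a})'|\preceq\mu_1|\mathbb{B}_k(\boldsymbol{\phi})'|$, $|\mathbb{B}_k(\boldsymbol{\phi})''|\preceq\mu_2|\mathbb{B}_k(\boldsymbol{\phi})'|$. A function $F$ on a convex set $C\subseteq\mathbb{R}^m$ is convex iff $F(\lambda x+(1-\lambda)y)\le\lambda F(x)+(1-\lambda)F(y)$ for all $x,y\in C$, $\lambda\in[0,1]$. *)

(* Defs.v *)
From Stdlib Require Import Reals Lra.
From Coquelicot Require Import Coquelicot.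
Open Scope R_scope.

(* Vectors of R^n are represented as functions nat -> R; only the entries
   with index < n are ever used. *)

(* Extended knot vector delta_i built from tau_0 < ... < tau_{l-1}. *)
Definition delta (k l : nat) (tau : nat -> R) (i : nat) : R :=
  let n := (k + l - 2)%nat in
  if Nat.ltb i k then tau 0%nat
  else if Nat.ltb i n then tau (i - k + 1)%nat
  else tau (l - 1)%nat.

Definition sdiv (num den : R) : R :=
  if Req_EM_T den 0 then 0 else num / den.

(* bsp d m i t = B_{i,m+1}(t) on the knot vector d (de Boor--Cox). *)
Fixpoint bsp (d : nat -> R) (m : nat) (i : nat) (t : R) : R :=
  match m with
  | O => if Rle_dec (d i) t then (if Rlt_dec t (d (S i)) then 1 else 0) else 0
  | S m' =>
      sdiv (t - d i) (d (i + S m')%nat - d i) * bsp d m' i t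
      + sdiv (d (i + S (S m'))%nat - t) (d (i + S (S m'))%nat - d (S i))
          * bsp d m' (S i) t
  end.

Definition Bspl (k l : nat) (tau : nat -> R) (i : nat) (t : R) : R :=
  bsp (delta k l tau) (k - 1) i t.

Definition BBk (k l : nat) (tau : nat -> R) (x : nat -> R) (t : R) : R :=
  sum_n (fun i => x i * Bspl k l tau i t) (k + l - 2 - 1)%nat.

(* The set S_{mu0,mu1,mu2} of intrinsic mode spline function souls.
   Pointwise conditions are imposed on the open interval (tau_0, tau_{l-1}),
   where the derivatives are ordinary two-sided ones. *)
Definition IMSS (k l : nat) (tau : nat -> R) (mu0 mu1 mu2 : R)
    (a phi : nat -> R) : Prop :=
  forall t, tau 0%nat < t < tau (l - 1)%nat ->
    0 <= BBk k l tau a t /\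
    mu0 <= Derive (BBk k l tau phi) t /\
    Rabs (Derive (BBk k l tau a) t) <= mu1 * Rabs (Derive (BBk k l tau phi) t) /\
    Rabs (Derive (Derive (BBk k l tau phi)) t)
      <= mu2 * Rabs (Derive (BBk k l tau phi) t).

Definition cost1 (k l : nat) (tau : nat -> R) (s a phi : nat -> R) : R :=
  RInt (fun t => (BBk k l tau s t - BBk k l tau a t * cos (BBk k l tau phi t)) ^ 2)
       (tau 0%nat) (tau (l - 1)%nat).

Definition vcomb (lam : R) (x y : nat -> R) : nat -> R :=
  fun i => lam * x i + (1 - lam) * y i.

Definition convex_on (C : (nat -> R) -> (nat -> R) -> Prop)
    (F : (nat -> R) -> (nat -> R) -> R) : Prop :=
  forall a1 p1 a2 p2 lam,
    C a1 p1 -> C a2 p2 -> 0 <= lam <= 1 ->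
    F (vcomb lam a1 a2) (vcomb lam p1 p2)
      <= lam * F a1 p1 + (1 - lam) * F a2 p2.

(* Main.v *)
Require Import Defs.
From Stdlib Require Import Reals Lra Lia ZArith.
From Coquelicot Require Import Coquelicot.
Open Scope R_scope.

Fixpoint ssum (f : nat -> R) (a len : nat) : R :=
  match len with O => 0 | S n => ssum f a n + f (a + n)%nat end.

Lemma ssum_ext f g a len : (forall i, (a <= i < a + len)%nat -> f i = g i) ->
  ssum f a len = ssum g a len.
Proof. induction len; simpl; intros H; auto. rewrite IHlen by (intros; apply H; lia). rewrite H by lia. auto. Qed.

Lemma ssum_zero f a len : (forall i, (a <= i < a + len)%nat -> f i = 0) -> ssum f a len = 0.
Proof. induction len; simpl; intros H; auto. rewrite IHlen by (intros; apply H; lia). rewrite H by lia. lra. Qed.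

Lemma ssum_plus f g a len : ssum (fun i => f i + g i) a len = ssum f a len + ssum g a len.
Proof. induction len; simpl; [lra|]. rewrite IHlen; ring. Qed.

Lemma ssum_scal r f a len : ssum (fun i => r * f i) a len = r * ssum f a len.
Proof. induction len; simpl; [ring|]. rewrite IHlen; ring. Qed.

Definition Uc d m j t := sdiv (t - d j) (d (j + S m)%nat - d j).
Definition Vc d m j t := sdiv (d (j + S m)%nat - t) (d (j + S m)%nat - d j).

Lemma bsp_S d m i t : bsp d (S m) i t = Uc d m i t * bsp d m i t + Vc d m (S i) t * bsp d m (S i) t.
Proof. simpl. unfold Uc, Vc. replace (S i + S m)%nat with (i + S (S m))%nat by lia. reflexivity. Qed.

Definition mono (d : nat -> R) := forall i j, (i <= j)%nat -> d i <= d j.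

Lemma bsp_supp d (Hm : mono d) m : forall i t, bsp d m i t <> 0 -> d i <= t < d (i + S m)%nat.
Proof.
  induction m; intros i t H.
  - simpl in H. replace (i+1)%nat with (S i) by lia.
    destruct (Rle_dec (d i) t); destruct (Rlt_dec t (d (S i))); try lra; split; lra.
  - rewrite bsp_S in H. destruct (Req_dec (bsp d m i t) 0) as [H0|H0].
    + rewrite H0 in H. assert (H1 : bsp d m (S i) t <> 0) by (intro E; rewrite E in H; apply H; ring).
      apply IHm in H1. assert (d i <= d (S i)) by (apply Hm; lia).
      replace (S i + S m)%nat with (i + S (S m))%nat in H1 by lia. lra.
    + apply IHm in H0. assert (d (i + S m)%nat <= d (i + S (S m))%nat) by (apply Hm; lia). lra.
Qed.

Lemma bsp_out d (Hm : mono d) m i t : (t < d i \/ d (i + S m)%nat <= t) -> bsp d m i t = 0.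
Proof. intros H. destruct (Req_dec (bsp d m i t) 0); auto. apply bsp_supp in H0; auto. lra. Qed.

Lemma UV_explicit d (Hm : mono d) m j t : bsp d m j t <> 0 ->
  d (j + S m)%nat - d j > 0 /\
  Uc d m j t = (t - d j) / (d (j + S m)%nat - d j) /\
  Vc d m j t = (d (j + S m)%nat - t) / (d (j + S m)%nat - d j).
Proof.
  intros H. apply bsp_supp in H; auto. unfold Uc, Vc, sdiv.
  destruct (Req_EM_T (d (j + S m)%nat - d j) 0); [lra|]. repeat split; lra.
Qed.

Lemma DR d m c a len t :
  ssum (fun i => c i * bsp d (S m) i t) a (S len) =
  c a * Uc d m a t * bsp d m a t
  + ssum (fun j => (c (pred j) * Vc d m j t + c j * Uc d m j t) * bsp d m j t) (S a) len
  + c (a + len)%nat * Vc d m (S (a + len)) t * bsp d m (S (a + len)) t.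
Proof.
  induction len.
  - cbn [ssum]. rewrite Nat.add_0_r. rewrite (bsp_S d m a t). ring.
  - change (ssum (fun i => c i * bsp d (S m) i t) a (S (S len))) with
      (ssum (fun i => c i * bsp d (S m) i t) a (S len) + c (a + S len)%nat * bsp d (S m) (a + S len)%nat t).
    rewrite IHlen. cbn [ssum]. replace (a + S len)%nat with (S (a + len)) by lia.
    replace (S a + len)%nat with (S (a + len)) by lia. simpl pred.
    rewrite bsp_S. ring.
Qed.

Lemma PU d (Hm : mono d) m : forall a len t, d (a + m)%nat <= t < d (a + len)%nat ->
  ssum (fun i => bsp d m i t) a len = 1.
Proof.
  induction m; intros a len t Ht.
  - induction len.
    + lra.
    + cbn [ssum]. destruct (Rlt_dec t (d (a + len)%nat)).
      * rewrite IHlen by lra. rewrite bsp_out; auto; lra.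
      * rewrite ssum_zero. simpl. replace (a + len + 1)%nat with (a + S len)%nat by lia.
        destruct (Rle_dec (d (a+len)%nat) t); try lra.
        replace (S (a + len)) with (a + S len)%nat by lia.
        destruct (Rlt_dec t (d (a + S len)%nat)); lra.
        intros i Hi. apply bsp_out; auto. right. assert (d (i + 1)%nat <= d (a+len)%nat) by (apply Hm; lia). lra.
  - destruct len.
    + exfalso. assert (d (a + 0)%nat <= d (a + S m)%nat) by (apply Hm; lia). lra.
    + rewrite (ssum_ext _ (fun i => 1 * bsp d (S m) i t)) by (intros; ring).
      rewrite DR. rewrite (bsp_out d Hm m a t) by (right; lra).
      rewrite (bsp_out d Hm m (S (a + len)) t) by (left; replace (S (a+len)) with (a + S len)%nat by lia; lra).
      rewrite (ssum_ext _ (fun j => bsp d m j t)).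
      + rewrite IHm. ring. replace (S a + m)%nat with (a + S m)%nat by lia.
        replace (S a + len)%nat with (a + S len)%nat by lia. auto.
      + intros j Hj. destruct (Req_dec (bsp d m j t) 0) as [E|E]. rewrite E; ring.
        destruct (UV_explicit d Hm m j t E) as [D [U V]]. rewrite U, V. field. lra.
Qed.

Fixpoint Gs (d : nat -> R) m i := match m with O => 0 | S m' => Gs d m' i + d (i + S m')%nat end.

Lemma Gs_shift d m i : Gs d (S m) i = d (S i) + Gs d m (S i).
Proof.
  induction m.
  - simpl. replace (i+1)%nat with (S i) by lia. ring.
  - change (Gs d (S (S m)) i) with (Gs d (S m) i + d (i + S (S m))%nat).
    rewrite IHm. simpl. replace (S (i + S m)) with (i + S (S m))%nat by lia. ring.
Qed.

Lemma LIN d (Hm : mono d) m : forall a len t, d (a + m)%nat <= t < d (a + len)%nat ->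
  ssum (fun i => Gs d m i * bsp d m i t) a len = INR m * t.
Proof.
  induction m; intros a len t Ht.
  - simpl. rewrite ssum_zero. ring. intros; ring.
  - destruct len.
    + exfalso. assert (d (a + 0)%nat <= d (a + S m)%nat) by (apply Hm; lia). lra.
    + rewrite DR. rewrite (bsp_out d Hm m a t) by (right; lra).
      rewrite (bsp_out d Hm m (S (a + len)) t) by (left; replace (S (a+len)) with (a + S len)%nat by lia; lra).
      rewrite (ssum_ext _ (fun j => Gs d m j * bsp d m j t + t * bsp d m j t)).
      + rewrite ssum_plus, ssum_scal, IHm, PU; auto.
        rewrite S_INR. ring.
        replace (S a + m)%nat with (a + S m)%nat by lia. replace (S a + len)%nat with (a + S len)%nat by lia.
        split; lra.
        replace (S a + m)%nat with (a + S m)%nat by lia. replace (S a + len)%nat with (a + S len)%nat by lia.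
        auto.
      + intros j Hj. destruct (Req_dec (bsp d m j t) 0) as [E|E]. rewrite E; ring.
        destruct (UV_explicit d Hm m j t E) as [D [U V]]. rewrite U, V.
        destruct j as [|j']; [lia|]. simpl pred. rewrite Gs_shift.
        change (Gs d (S m) (S j')) with (Gs d m (S j') + d (S j' + S m)%nat).
        field. lra.
Qed.

Definition Htau (l : nat) (tau : nat -> R) := forall i, (i + 1 < l)%nat -> tau i < tau (S i).

Lemma tau_mono l tau (Ht : Htau l tau) p q : (p <= q)%nat -> (q < l)%nat -> tau p <= tau q.
Proof.
  induction q; intros H1 H2.
  - replace p with 0%nat by lia. lra.
  - destruct (Nat.eq_dec p (S q)). subst; lra.
    assert (tau q < tau (S q)) by (apply Ht; lia). assert (tau p <= tau q) by (apply IHq; lia). lra.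
Qed.

Lemma tau_smono l tau (Ht : Htau l tau) p q : (p < q)%nat -> (q < l)%nat -> tau p < tau q.
Proof.
  intros H1 H2. destruct q; [lia|]. assert (tau q < tau (S q)) by (apply Ht; lia).
  assert (tau p <= tau q) by (apply (tau_mono l); auto; lia). lra.
Qed.

Definition posn (k l i : nat) : nat :=
  if Nat.ltb i k then 0%nat else if Nat.ltb i (k + l - 2) then (i - k + 1)%nat else (l - 1)%nat.

Lemma delta_posn k l tau i : delta k l tau i = tau (posn k l i).
Proof. unfold delta, posn. destruct (Nat.ltb i k); auto. destruct (Nat.ltb i (k+l-2)); auto. Qed.

Lemma posn_lt k l i : (1 <= k)%nat -> (k <= l - 1)%nat -> (posn k l i < l)%nat.
Proof. intros. unfold posn. destruct (Nat.ltb_spec i k); [lia|]. destruct (Nat.ltb_spec i (k+l-2)); lia. Qed.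

Lemma posn_mono k l i j : (1 <= k)%nat -> (k <= l - 1)%nat -> (i <= j)%nat -> (posn k l i <= posn k l j)%nat.
Proof.
  intros. unfold posn.
  destruct (Nat.ltb_spec i k); destruct (Nat.ltb_spec j k); try lia;
  destruct (Nat.ltb_spec i (k+l-2)); destruct (Nat.ltb_spec j (k+l-2)); lia.
Qed.

Lemma delta_mono k l tau (Ht : Htau l tau) : (1 <= k)%nat -> (k <= l - 1)%nat -> mono (delta k l tau).
Proof.
  intros H1 H2 i j Hij. rewrite !delta_posn. apply (tau_mono l); auto.
  apply posn_mono; auto. apply posn_lt; auto.
Qed.

Lemma sum_n_ssum (f : nat -> R) N : sum_n f N = ssum f 0 (S N).
Proof.
  induction N.
  - rewrite sum_O. simpl. ring.
  - rewrite sum_Sn, IHN. cbn [ssum]. simpl. unfold plus; simpl. ring.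
Qed.

Lemma BBk_ssum k l tau x t : (1 <= k + l - 2)%nat ->
  BBk k l tau x t = ssum (fun i => x i * Bspl k l tau i t) 0 (k + l - 2).
Proof.
  intros H. unfold BBk. rewrite sum_n_ssum. f_equal. lia.
Qed.

Lemma interval_knots k l tau t : (4 <= k)%nat -> (k <= l - 1)%nat ->
  tau 0%nat < t < tau (l - 1)%nat ->
  delta k l tau (0 + (k - 1))%nat <= t < delta k l tau (0 + (k + l - 2))%nat.
Proof.
  intros. rewrite !delta_posn. unfold posn.
  destruct (Nat.ltb_spec (0 + (k-1)) k); [|lia].
  destruct (Nat.ltb_spec (0 + (k+l-2)) k); [lia|].
  destruct (Nat.ltb_spec (0 + (k+l-2)) (k + l - 2)); [lia|]. lra.
Qed.

Lemma BB_affine k l tau (Ht : Htau l tau) x al be t : (4 <= k)%nat -> (k <= l - 1)%nat ->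
  (forall i, x i = al * Gs (delta k l tau) (k - 1) i + be) ->
  tau 0%nat < t < tau (l - 1)%nat ->
  BBk k l tau x t = al * INR (k - 1) * t + be.
Proof.
  intros Hk Hl Hx Hti. rewrite BBk_ssum by lia.
  rewrite (ssum_ext _ (fun i => al * (Gs (delta k l tau) (k-1) i * Bspl k l tau i t) + be * Bspl k l tau i t))
    by (intros; rewrite Hx; ring).
  rewrite ssum_plus, !ssum_scal. unfold Bspl.
  assert (Hm : mono (delta k l tau)) by (apply delta_mono; auto; lia).
  pose proof (interval_knots k l tau t Hk Hl Hti).
  rewrite LIN, PU; auto. ring.
Qed.

Definition PW (l : nat) (tau : nat -> R) (f : R -> R) :=
  forall j, (S j < l)%nat -> exists g : R -> R, (forall x, continuous g x) /\
     forall t, tau j < t < tau (S j) -> f t = g t.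

Lemma PW_ext l tau f g : (forall t, f t = g t) -> PW l tau f -> PW l tau g.
Proof. intros E H j Hj. destruct (H j Hj) as [h [C Eh]]. exists h; split; auto. intros; rewrite <- E; auto. Qed.

Lemma PW_cont l tau g : (forall x, continuous g x) -> PW l tau g.
Proof. intros C j Hj. exists g; auto. Qed.

Lemma PW_plus l tau f g : PW l tau f -> PW l tau g -> PW l tau (fun t => f t + g t).
Proof.
  intros Hf Hg j Hj. destruct (Hf j Hj) as [f' [Cf Ef]]. destruct (Hg j Hj) as [g' [Cg Eg]].
  exists (fun t => f' t + g' t). split.
  - intros x. apply (continuous_plus f' g'); auto.
  - intros t Ht; rewrite Ef, Eg; auto.
Qed.

Lemma PW_mult l tau f g : PW l tau f -> PW l tau g -> PW l tau (fun t => f t * g t).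
Proof.
  intros Hf Hg j Hj. destruct (Hf j Hj) as [f' [Cf Ef]]. destruct (Hg j Hj) as [g' [Cg Eg]].
  exists (fun t => f' t * g' t). split.
  - intros x. apply (continuous_mult f' g'); auto.
  - intros t Ht; rewrite Ef, Eg; auto.
Qed.

Lemma PW_ssum l tau (F : nat -> R -> R) a len : (forall i, PW l tau (F i)) ->
  PW l tau (fun t => ssum (fun i => F i t) a len).
Proof.
  intros H. induction len.
  - apply PW_cont. intros; apply continuous_const.
  - apply (PW_plus l tau (fun t => ssum (fun i => F i t) a len) (F (a + len)%nat)); auto.
Qed.

Lemma cont_sdiv_lin (al be D : R) : forall x, continuous (fun t => sdiv (al * t + be) D) x.
Proof.
  intros x. unfold sdiv. destruct (Req_EM_T D 0).
  - apply continuous_const.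
  - apply (@ex_derive_continuous R_AbsRing R_NormedModule). auto_derive. auto.
Qed.

Lemma PW_bsp k l tau (Ht : Htau l tau) : (4 <= k)%nat -> (k <= l - 1)%nat ->
  forall m i, PW l tau (bsp (delta k l tau) m i).
Proof.
  intros Hk Hl m. induction m; intros i.
  - intros j Hj. exists (fun _ => bsp (delta k l tau) 0 i ((tau j + tau (S j)) / 2)). split.
    + intros; apply continuous_const.
    + intros t Htj. simpl. rewrite !delta_posn.
      assert (tau j < tau (S j)) by (apply Ht; lia).
      assert (Hd : forall p, (p < l)%nat -> (tau p <= tau j \/ tau (S j) <= tau p)).
      { intros p Hp. destruct (Compare_dec.le_lt_dec p j).
        - left. apply (tau_mono l); auto; lia.
        - right. apply (tau_mono l); auto; lia. }
      assert (HA := Hd (posn k l i) (posn_lt k l i ltac:(lia) Hl)).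
      assert (HB := Hd (posn k l (S i)) (posn_lt k l (S i) ltac:(lia) Hl)).
      destruct (Rle_dec (tau (posn k l i)) t); destruct (Rle_dec (tau (posn k l i)) ((tau j + tau (S j)) / 2));
      try (exfalso; lra);
      try (destruct (Rlt_dec t (tau (posn k l (S i)))); destruct (Rlt_dec ((tau j + tau (S j)) / 2) (tau (posn k l (S i))));
       try (exfalso; lra)); reflexivity.
  - apply (PW_ext l tau (fun t => Uc (delta k l tau) m i t * bsp (delta k l tau) m i t
                     + Vc (delta k l tau) m (S i) t * bsp (delta k l tau) m (S i) t)).
    { intros t; rewrite bsp_S; auto. }
    apply PW_plus; apply PW_mult; auto; apply PW_cont; intros x.
    + unfold Uc. eapply continuous_ext; [|apply (cont_sdiv_lin 1 (- delta k l tau i))].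
      intros; simpl; f_equal; ring.
    + unfold Vc. eapply continuous_ext; [|apply (cont_sdiv_lin (-1) (delta k l tau (S i + S m)%nat))].
      intros; simpl; f_equal; ring.
Qed.

Lemma PW_BBk k l tau (Ht : Htau l tau) x : (4 <= k)%nat -> (k <= l - 1)%nat -> PW l tau (BBk k l tau x).
Proof.
  intros Hk Hl. apply (PW_ext l tau (fun t => ssum (fun i => x i * Bspl k l tau i t) 0 (k + l - 2))).
  { intros; rewrite BBk_ssum; auto; lia. }
  apply (PW_ssum l tau (fun i t => x i * Bspl k l tau i t)). intros i.
  apply (PW_mult l tau (fun _ => x i)). apply PW_cont; intros; apply continuous_const.
  unfold Bspl. apply PW_bsp; auto.
Qed.

Lemma PW_int l tau (Ht : Htau l tau) f : (1 <= l)%nat -> PW l tau f -> ex_RInt f (tau 0%nat) (tau (l - 1)%nat).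
Proof.
  intros Hl H. assert (forall j, (j < l)%nat -> ex_RInt f (tau 0%nat) (tau j)).
  { induction j; intros Hj. apply ex_RInt_point.
    apply ex_RInt_Chasles with (tau j). apply IHj; lia.
    destruct (H j Hj) as [g [C E]].
    assert (tau j < tau (S j)) by (apply Ht; lia).
    apply ex_RInt_ext with g.
    { intros x Hx. rewrite Rmin_left, Rmax_right in Hx by lra. symmetry; apply E; lra. }
    apply (@ex_RInt_continuous R_CompleteNormedModule). intros; apply C. }
  apply H0; lia.
Qed.

Lemma nat_unbounded r : exists N : nat, r < INR N.
Proof.
  destruct (archimed r) as [H1 _]. exists (Z.to_nat (up r)).
  destruct (Z_le_gt_dec 0 (up r)).
  - rewrite INR_IZR_INZ, Z2Nat.id; auto.
  - pose proof (pos_INR (Z.to_nat (up r))). apply Z.gt_lt in g. apply IZR_lt in g. lra.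
Qed.

Definition phiv k l tau (om th : R) (i : nat) : R :=
  om / INR (k - 1) * Gs (delta k l tau) (k - 1) i + th.

Lemma INRk_pos k : (4 <= k)%nat -> 0 < INR (k - 1).
Proof. intros. apply lt_0_INR. lia. Qed.

Lemma BB_phi k l tau (Ht : Htau l tau) om th phi t : (4 <= k)%nat -> (k <= l - 1)%nat ->
  (forall i, phi i = phiv k l tau om th i) -> tau 0%nat < t < tau (l - 1)%nat ->
  BBk k l tau phi t = om * t + th.
Proof.
  intros Hk Hl Hp Hti. rewrite (BB_affine k l tau Ht phi (om / INR (k-1)) th t Hk Hl); auto.
  field. pose proof (INRk_pos k Hk). lra.
Qed.

Lemma BB_one k l tau (Ht : Htau l tau) a t : (4 <= k)%nat -> (k <= l - 1)%nat ->
  (forall i, a i = 1) -> tau 0%nat < t < tau (l - 1)%nat -> BBk k l tau a t = 1.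
Proof.
  intros Hk Hl Ha Hti. rewrite (BB_affine k l tau Ht a 0 1 t Hk Hl); auto. ring.
  intros; rewrite Ha; ring.
Qed.

Lemma loc_int (T0 T1 t : R) : T0 < t < T1 -> locally t (fun y => T0 < y < T1).
Proof. intros H. apply (open_and _ _ (open_gt T0) (open_lt T1)). auto. Qed.

Lemma IMSS_ok k l tau (Ht : Htau l tau) mu0 mu1 mu2 om th a phi :
  (4 <= k)%nat -> (k <= l - 1)%nat -> 0 < mu0 -> 0 < mu1 -> 0 < mu2 -> mu0 <= om ->
  (forall i, a i = 1) -> (forall i, phi i = phiv k l tau om th i) ->
  IMSS k l tau mu0 mu1 mu2 a phi.
Proof.
  intros Hk Hl H0 H1 H2 Hom Ha Hp t Hti.
  assert (D1 : forall y, tau 0%nat < y < tau (l - 1)%nat -> Derive (BBk k l tau phi) y = om).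
  { intros y Hy. rewrite (Derive_ext_loc _ (fun y => om * y + th)).
    apply is_derive_unique. auto_derive; auto. ring.
    eapply filter_imp; [|apply (loc_int _ _ _ Hy)]. intros z Hz. apply BB_phi; auto. }
  assert (D2 : Derive (Derive (BBk k l tau phi)) t = 0).
  { rewrite (Derive_ext_loc _ (fun _ => om)). apply Derive_const.
    eapply filter_imp; [|apply (loc_int _ _ _ Hti)]. intros z Hz. apply D1; auto. }
  assert (D3 : Derive (BBk k l tau a) t = 0).
  { rewrite (Derive_ext_loc _ (fun _ => 1)). apply Derive_const.
    eapply filter_imp; [|apply (loc_int _ _ _ Hti)]. intros z Hz. apply BB_one; auto. }
  rewrite D1, D2, D3, (BB_one k l tau Ht a t) by auto. rewrite Rabs_R0.
  assert (0 <= Rabs om) by apply Rabs_pos.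
  repeat split; try lra; apply Rmult_le_pos; lra.
Qed.

Definition Gf k l tau s om th :=
  RInt (fun t => (BBk k l tau s t - cos (om * t + th)) ^ 2) (tau 0%nat) (tau (l - 1)%nat).

Lemma cost_eval k l tau (Ht : Htau l tau) s om th a phi :
  (4 <= k)%nat -> (k <= l - 1)%nat ->
  (forall i, a i = 1) -> (forall i, phi i = phiv k l tau om th i) ->
  cost1 k l tau s a phi = Gf k l tau s om th.
Proof.
  intros Hk Hl Ha Hp. unfold cost1, Gf. apply RInt_ext.
  assert (tau 0%nat < tau (l - 1)%nat) by (apply (tau_smono l); auto; lia).
  intros x Hx. rewrite Rmin_left, Rmax_right in Hx by lra.
  rewrite (BB_one k l tau Ht a x), (BB_phi k l tau Ht om th phi x) by (auto; lra). rewrite Rmult_1_l. reflexivity.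
Qed.

Lemma cos_shift2PI x : cos (x + 2 * PI) = cos x.
Proof. rewrite cos_plus, cos_2PI, sin_2PI. ring. Qed.

Lemma Gf_2PI k l tau s om th : Gf k l tau s om (th + 2 * PI) = Gf k l tau s om th.
Proof.
  unfold Gf. apply RInt_ext. intros x _. replace (om * x + (th + 2 * PI)) with ((om * x + th) + 2 * PI) by ring.
  rewrite cos_shift2PI. auto.
Qed.

Lemma Gf_ex k l tau (Ht : Htau l tau) s om th : (4 <= k)%nat -> (k <= l - 1)%nat ->
  ex_RInt (fun t => (BBk k l tau s t - cos (om * t + th)) ^ 2) (tau 0%nat) (tau (l - 1)%nat).
Proof.
  intros Hk Hl. apply PW_int; auto; try lia.
  apply (PW_ext l tau (fun t => (BBk k l tau s t + (- cos (om * t + th))) * (BBk k l tau s t + (- cos (om * t + th))))).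
  { intros; ring. }
  assert (P : PW l tau (fun t => BBk k l tau s t + (- cos (om * t + th)))).
  { apply PW_plus. apply PW_BBk; auto. apply PW_cont. intros x.
    apply (@ex_derive_continuous R_AbsRing R_NormedModule). auto_derive. auto. }
  apply (PW_mult l tau _ _ P P).
Qed.

Lemma cosP2 a b : cos (a + (b + PI / 2)) = - sin (a + b).
Proof. replace (a + (b + PI/2)) with ((a + b) + PI/2) by ring. rewrite cos_plus, cos_PI2, sin_PI2. ring. Qed.
Lemma sinP2 a b : sin (a + (b + PI / 2)) = cos (a + b).
Proof. replace (a + (b + PI/2)) with ((a + b) + PI/2) by ring. rewrite sin_plus, cos_PI2, sin_PI2. ring. Qed.

Theorem mainTheorem4 (k l : nat) (tau : nat -> R) (mu0 mu1 mu2 : R) (s : nat -> R) :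
  (4 <= k)%nat -> (k <= l - 1)%nat ->
  (forall i, (i + 1 < l)%nat -> tau i < tau (S i)) ->
  0 < mu0 -> 0 < mu1 -> 0 < mu2 ->
  ~ convex_on (IMSS k l tau mu0 mu1 mu2) (cost1 k l tau s).
Proof.
  intros Hk Hl Ht' H0 H1 H2 Hconv.
  assert (Ht : Htau l tau) by exact Ht'.
  assert (HT : tau 0%nat < tau (l - 1)%nat) by (apply (tau_smono l); auto; lia).
  set (T0 := tau 0%nat) in *. set (T1 := tau (l - 1)%nat) in *.
  destruct (nat_unbounded (mu0 * (T1 - T0) / (2 * PI))) as [N HN].
  pose proof PI_RGT_0 as HPI.
  set (Lw := PI / 2 + 2 * INR N * PI).
  set (om := Lw / (T1 - T0)).
  assert (HLw : mu0 * (T1 - T0) < Lw).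
  { unfold Lw. assert (mu0 * (T1 - T0) < 2 * INR N * PI).
    { apply (Rmult_lt_compat_r (2 * PI)) in HN; [|lra].
      replace (mu0 * (T1 - T0) / (2 * PI) * (2 * PI)) with (mu0 * (T1 - T0)) in HN by (field; lra). lra. }
    lra. }
  assert (Hom : mu0 <= om).
  { unfold om. apply Rlt_le. apply Rlt_div_r; lra. }
  assert (Hom0 : 0 < om) by lra.
  set (av := fun _ : nat => 1).
  assert (step : forall th, Gf k l tau s om (th + PI / 2) <= Gf k l tau s om th).
  { intros th.
    specialize (Hconv av (phiv k l tau om th) av (phiv k l tau om (th + 2 * PI)) (3/4)).
    rewrite (cost_eval k l tau Ht s om th av (phiv k l tau om th)) in Hconv by auto.
    rewrite (cost_eval k l tau Ht s om (th + 2 * PI) av) in Hconv by auto.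
    rewrite (cost_eval k l tau Ht s om (th + PI / 2)) in Hconv.
    - rewrite Gf_2PI in Hconv.
      assert (Gf k l tau s om (th + PI / 2) <= 3 / 4 * Gf k l tau s om th + (1 - 3 / 4) * Gf k l tau s om th).
      { apply Hconv; [apply (IMSS_ok k l tau Ht mu0 mu1 mu2 om th) | apply (IMSS_ok k l tau Ht mu0 mu1 mu2 om (th + 2 * PI)) | ];
          auto; lra. }
      lra.
    - auto.
    - auto.
    - intros i; unfold vcomb, av; ring.
    - intros i; unfold vcomb, phiv. field. pose proof (INRk_pos k Hk); lra. }
  set (th0 := - (om * (T0 + T1)) / 2).
  set (t1 := th0 + PI / 2). set (t2 := t1 + PI / 2). set (t3 := t2 + PI / 2).
  assert (E4 : Gf k l tau s om (t3 + PI / 2) = Gf k l tau s om th0).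
  { replace (t3 + PI / 2) with (th0 + 2 * PI) by (unfold t3, t2, t1; field). apply Gf_2PI. }
  pose proof (step th0) as S0. pose proof (step t1) as S1. pose proof (step t2) as S2. pose proof (step t3) as S3.
  fold t1 in S0. fold t2 in S1. fold t3 in S2.
  assert (Hsum : Gf k l tau s om th0 + Gf k l tau s om t2 - Gf k l tau s om t1 - Gf k l tau s om t3 = 0) by lra.
  pose (h := fun th t => (BBk k l tau s t - cos (om * t + th)) ^ 2).
  assert (I : forall th, is_RInt (h th) T0 T1 (Gf k l tau s om th)).
  { intros th. apply (RInt_correct (V := R_CompleteNormedModule)). apply Gf_ex; auto. }
  pose proof (is_RInt_minus _ _ _ _ _ _ (is_RInt_minus _ _ _ _ _ _ (is_RInt_plus _ _ _ _ _ _ (I th0) (I t2)) (I t1)) (I t3)) as J.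
  apply (is_RInt_ext _ (fun y => 2 * cos (2 * (om * y + th0)))) in J.
  2:{ intros x _. unfold h, minus, plus, opp; simpl. unfold t3, t2, t1.
      repeat rewrite ?cosP2, ?sinP2. rewrite cos_2a. ring. }
  assert (K : is_RInt (fun y => 2 * cos (2 * (om * y + th0))) T0 T1
               (minus (sin (2 * (om * T1 + th0)) / om) (sin (2 * (om * T0 + th0)) / om))).
  { apply (is_RInt_derive (fun y => sin (2 * (om * y + th0)) / om)).
    - intros x _. auto_derive; auto. field. lra.
    - intros x _. apply (@ex_derive_continuous R_AbsRing R_NormedModule). auto_derive. auto. }
  apply (is_RInt_unique (V := R_CompleteNormedModule)) in J. apply (is_RInt_unique (V := R_CompleteNormedModule)) in K. rewrite J in K.
  unfold minus, plus, opp in K; simpl in K.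
  replace (2 * (om * T1 + th0)) with Lw in K by (unfold th0, om; field; lra).
  replace (2 * (om * T0 + th0)) with (- Lw) in K by (unfold th0, om; field; lra).
  rewrite sin_neg in K. unfold Lw in K. rewrite sin_period, sin_PI2 in K.
  assert (Q : 1 / om + - (- (1) / om) = 0) by lra.
  assert (0 < 1 / om) by (apply Rdiv_lt_0_compat; lra). replace (1 / om + - (- (1) / om)) with (2 * (1/om)) in Q by (field; lra). lra.
Qed.
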